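(* Let $\mathcal{P}_1,\mathcal{P}_2$ be finite posets with $p_j=|\mathcal{P}_j|$, and for $j=1,2$ let $\mathbf{V}_j\in\mathbb{R}^{p_j\times q_j}$ be a fixed matrix whose columns are the $q_j$ extremal rays of $\mathcal{C}(\mathcal{P}_j)$ (one representative vector per ray). Then for every matrix $\mathbf{T}\in\mathcal{N}_{<\infty}$, the nondecreasing rank of $\mathbf{T}$ equals the smallest nonnegative rank of a matrix $\mathbf{H}\in\mathbb{R}^{q_1\times q_2}$ with nonnegative entries satisfying $\mathbf{T}=\mathbf{V}_1\mathbf{H}\mathbf{V}_2^\intercal$.
   Context: For a finite poset $\mathcal{Q}$, the order cone $\mathcal{C}(\mathcal{Q})$ is the set of $\mathbf{f}\in\mathbb{R}^{\mathcal{Q}}$ with $f_x\ge0$ for all $x$ and $f_x\le f_y$ whenever $x\preceq y$; it is a polyhedral cone with finitely many extremal rays (one-dimensional faces). $\mathcal{N}_{<\infty}$ is the set of matrices $\mathbf{T}=\sum_{i=1}^r\mathbf{a}_i\mathbf{b}_i^\intercal$ (finite $r$) with $\mathbf{a}_i\in\mathcal{C}(\mathcal{P}_1)$, $\mathbf{b}_i\in\mathcal{C}(\mathcal{P}_2)$, and the nondecreasing rank is the minimal such $r$. The nonnegative rank of a nonnegative matrix $\mathbf{H}$ is the minimal $r$ with $\mathbf{H}=\sum_{i=1}^r\mathbf{c}_i\mathbf{d}_i^\intercal$, $\mathbf{c}_i,\mathbf{d}_i$ entrywise nonnegative. *)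

(* Defs.v *)
From HB Require Import structures.
From mathcomp Require Import all_boot all_order all_algebra.
From mathcomp Require Import reals.
Set Implicit Arguments. Unset Strict Implicit. Unset Printing Implicit Defensive.
Import Order.TTheory GRing.Theory Num.Theory.
Local Open Scope ring_scope.

Section Defs.
Variable R : realType.

Definition order_cone (d : Order.disp_t) (P : finPOrderType d) (f : P -> R) : Prop :=
  (forall x, 0 <= f x) /\ (forall x y : P, (x <= y)%O -> f x <= f y).

Definition extreme_ray_vec (T : Type) (C : (T -> R) -> Prop) (v : T -> R) : Prop :=
  [/\ C v, (exists x, v x != 0) &
      forall a b : T -> R, C a -> C b -> (forall x, v x = a x + b x) ->
        exists c : R, 0 <= c /\ forall x, a x = c * v x].

Definition extreme_rays_matrix (T : Type) (C : (T -> R) -> Prop) (q : nat)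
    (V : T -> 'I_q -> R) : Prop :=
  (forall i : 'I_q, extreme_ray_vec C (fun x => V x i)) /\
  (forall v, extreme_ray_vec C v ->
     exists! i : 'I_q, exists c : R, 0 < c /\ forall x, v x = c * V x i).

Definition nd_decomp (d1 d2 : Order.disp_t) (P1 : finPOrderType d1)
    (P2 : finPOrderType d2) (T : P1 -> P2 -> R) (r : nat) : Prop :=
  exists (a : 'I_r -> P1 -> R) (b : 'I_r -> P2 -> R),
    [/\ forall i, order_cone (a i), forall i, order_cone (b i) &
        forall x y, T x y = \sum_(i < r) a i x * b i y].

Definition in_Nfin (d1 d2 : Order.disp_t) (P1 : finPOrderType d1)
    (P2 : finPOrderType d2) (T : P1 -> P2 -> R) : Prop :=
  exists r, nd_decomp T r.

Definition is_ndrank (d1 d2 : Order.disp_t) (P1 : finPOrderType d1)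
    (P2 : finPOrderType d2) (T : P1 -> P2 -> R) (r : nat) : Prop :=
  nd_decomp T r /\ forall s, nd_decomp T s -> (r <= s)%N.

Definition nn_decomp (q1 q2 : nat) (H : 'M[R]_(q1, q2)) (r : nat) : Prop :=
  exists (c : 'I_r -> 'I_q1 -> R) (e : 'I_r -> 'I_q2 -> R),
    [/\ forall i k, 0 <= c i k, forall i k, 0 <= e i k &
        forall k l, H k l = \sum_(i < r) c i k * e i l].

Definition is_nnrank (q1 q2 : nat) (H : 'M[R]_(q1, q2)) (r : nat) : Prop :=
  nn_decomp H r /\ forall s, nn_decomp H s -> (r <= s)%N.

Definition feasible_H (d1 d2 : Order.disp_t) (P1 : finPOrderType d1)
    (P2 : finPOrderType d2) (q1 q2 : nat) (V1 : P1 -> 'I_q1 -> R)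
    (V2 : P2 -> 'I_q2 -> R) (T : P1 -> P2 -> R) (H : 'M[R]_(q1, q2)) : Prop :=
  (forall k l, 0 <= H k l) /\
  forall x y, T x y = \sum_(k < q1) \sum_(l < q2) V1 x k * H k l * V2 y l.

End Defs.

(* Main.v *)
Require Import Defs.
From HB Require Import structures.
From mathcomp Require Import all_boot all_order all_algebra.
From mathcomp Require Import reals boolp lra ring.
Import Order.TTheory GRing.Theory Num.Theory.
Local Open Scope ring_scope.

Section Cone.
Variables (R : realType) (d : Order.disp_t) (P : finPOrderType d).

Lemma min_exists (K : {pred P}) (f : P -> R) x0 : x0 \in K ->
  exists2 y, y \in K & forall z, z \in K -> f y <= f z.
Proof.
move=> Kx0; case: (@arg_minP _ R P x0 K f Kx0) => y Ky H.
by exists y.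
Qed.

Lemma cone_decomp q (V : P -> 'I_q -> R) :
  extreme_rays_matrix (@order_cone R d P) V ->
  forall f, order_cone f ->
  exists h : 'I_q -> R, (forall i, 0 <= h i) /\
    forall x, f x = \sum_(i < q) h i * V x i.
Proof.
move=> [_ HV] f0 Cf0.
suff: forall n (f : P -> R), (#|[set y | (0 < f y)%R]| < n)%N -> order_cone f ->
  exists h : 'I_q -> R, (forall i, 0 <= h i) /\
    forall x, f x = \sum_(i < q) h i * V x i by move=> H; apply: (H _ f0 (ltnSn _)) Cf0.
elim=> [//|n IH] f Hn [f0ge fmono].
have [x0 fx0|none] := pickP (fun y => 0 < f y); last first.
  exists (fun _ => 0); split=> // x; rewrite big1 => [|i _]; last by rewrite mul0r.
  by apply/eqP; rewrite eq_le f0ge andbT leNgt none.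
pose e : rel P := fun u v => [&& 0 < f u, 0 < f v & ((u <= v)%O || (v <= u)%O)].
have sym_e : symmetric e.
  by move=> u v; rewrite /e; case: (0 < f u); case: (0 < f v); rewrite //= orbC.
have csym := sym_connect_sym sym_e.
pose K : {pred P} := [pred y | connect e x0 y].
have Kx0 : x0 \in K by rewrite inE connect0.
have Kpos : forall y, y \in K -> 0 < f y.
  move=> y Ky.
  have cl : closed e [pred z | 0 < f z].
    by move=> u v /and3P[fu fv _]; rewrite !inE fu fv.
  by have := closed_connect cl Ky; rewrite !inE fx0.
have Kup : forall u v, u \in K -> (u <= v)%O -> v \in K.
  move=> u v Ku uv; have fu := Kpos u Ku.
  have fv : 0 < f v by apply: lt_le_trans fu (fmono _ _ uv).
  rewrite inE; apply: connect_trans Ku _; apply: connect1.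
  by rewrite /e fu fv uv.
have Kdown : forall u v, v \in K -> (u <= v)%O -> 0 < f u -> u \in K.
  move=> u v Kv uv fu; have fv := Kpos v Kv.
  rewrite inE; apply: connect_trans Kv _; apply: connect1.
  by rewrite /e fu fv uv orbT.
pose ind : P -> R := fun y => if y \in K then 1 else 0.
have Cind : order_cone ind.
  split=> [y|u v uv]; rewrite /ind; first by case: ifP.
  case: ifP => Ku; last by case: ifP.
  by rewrite (Kup u v Ku uv).
have ext : extreme_ray_vec (@order_cone R d P) ind.
  split=> //; first by exists x0; rewrite /ind Kx0 oner_neq0.
  move=> a b [a0 amono] [b0 bmono] hab.
  have edge : forall u v, e u v -> a u = a v.
    move=> u v /and3P[fu fv uv].
    have iuv : ind u = ind v.
      rewrite /ind; case: (boolP (u \in K)) => Ku; case: (boolP (v \in K)) => Kv //.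
      - case/orP: uv => uv; first by rewrite (Kup u v Ku uv) in Kv.
        by rewrite (Kdown v u Ku uv fv) in Kv.
      - case/orP: uv => uv; first by rewrite (Kdown u v Kv uv fu) in Ku.
        by rewrite (Kup v u Kv uv) in Ku.
    have s : a u + b u = a v + b v by rewrite -!hab.
    case/orP: uv => uv.
      have := amono _ _ uv; have := bmono _ _ uv; lra.
    have := amono _ _ uv; have := bmono _ _ uv; lra.
  exists (a x0); split; first exact: a0.
  move=> x; rewrite /ind; case: ifP => Kx.
    rewrite mulr1.
    have cl : closed e [pred z | a z == a x0].
      by move=> u v /edge; rewrite !inE => ->.
    by have := closed_connect cl Kx; rewrite !inE eqxx => /esym/eqP.
  have := hab x; rewrite /ind Kx mulr0 => h0.
  have := a0 x; have := b0 x; lra.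
have [i0 [[c [c0 hc]] _]] := HV _ ext.
have [ym Kym ymin] := @min_exists K f x0 Kx0.
pose m := f ym.
have m0 : 0 < m := Kpos _ Kym.
pose g : P -> R := fun y => f y - m * ind y.
have Cg : order_cone g.
  split=> [y|u v uv]; rewrite /g /ind.
    case: ifP => Ky; last by rewrite mulr0 subr0.
    by rewrite mulr1 subr_ge0 ymin.
  case: (boolP (u \in K)) => Ku; case: (boolP (v \in K)) => Kv.
  - by rewrite lerD2r fmono.
  - by rewrite (Kup u v Ku uv) in Kv.
  - have fu0 : f u = 0.
      apply/eqP; rewrite eq_le f0ge andbT leNgt; apply/negP => fu.
      by rewrite (Kdown u v Kv uv fu) in Ku.
    by rewrite fu0 mulr0 subr0 mulr1 subr_ge0 ymin.
  - by rewrite !mulr0 !subr0 fmono.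
have [h' [h'0 h'e]] : exists h : 'I_q -> R, (forall i, 0 <= h i) /\
    forall x, g x = \sum_(i < q) h i * V x i.
  apply: IH Cg; rewrite -ltnS; apply: leq_trans Hn.
  apply: proper_card; apply/properP; split.
    apply/subsetP => y; rewrite !inE /g /ind; case: ifP => _; last by rewrite mulr0 subr0.
    by rewrite mulr1 => gy; apply: lt_trans gy _; rewrite ltrBlDr ltrDl.
  by exists ym; rewrite !inE ?m0 ?Kpos // /g /ind Kym mulr1 subrr ltxx.
exists (fun i => h' i + (i == i0)%:R * (m * c)); split.
  move=> i; apply: addr_ge0 => //; apply: mulr_ge0; first by case: (i == i0).
  by apply: mulr_ge0; apply: ltW.
move=> x; have -> : f x = g x + m * ind x by rewrite /g subrK.
rewrite h'e hc.
rewrite [in RHS](eq_bigr (fun i => h' i * V x i + (i == i0)%:R * (m * c) * V x i)); last by move=> i _; rewrite mulrDl.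
rewrite big_split /=; congr (_ + _).
rewrite (bigD1 i0) //= eqxx mul1r big1 ?addr0 ?mulrA //.
by move=> i /negbTE ->; rewrite !mul0r.
Qed.
End Cone.

Section Main.
Variable R : realType.

Lemma sum_alg r q1 q2 (A : 'I_q1 -> R) (B : 'I_q2 -> R)
  (c : 'I_r -> 'I_q1 -> R) (e : 'I_r -> 'I_q2 -> R) :
  \sum_(i < r) (\sum_(k < q1) c i k * A k) * (\sum_(l < q2) e i l * B l) =
  \sum_(k < q1) \sum_(l < q2) A k * (\sum_(i < r) c i k * e i l) * B l.
Proof.
under eq_bigr do rewrite big_distrlr /=.
rewrite exchange_big /=; apply: eq_bigr => k _.
rewrite exchange_big /=; apply: eq_bigr => l _.
rewrite mulr_sumr mulr_suml; apply: eq_bigr => i _; ring.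
Qed.

Lemma comb_cone d (P : finPOrderType d) q (V : P -> 'I_q -> R) (c : 'I_q -> R) :
  extreme_rays_matrix (@order_cone R d P) V -> (forall k, 0 <= c k) ->
  order_cone (fun x => \sum_(k < q) c k * V x k).
Proof.
move=> [HV _] c0; split=> [x|x y xy].
  apply: sumr_ge0 => k _; apply: mulr_ge0 => //.
  by case: (HV k) => [[H _] _ _]; apply: H.
apply: ler_sum => k _; apply: ler_wpM2l => //.
by case: (HV k) => [[_ H] _ _]; apply: H.
Qed.

Lemma nd_iff d1 d2 (P1 : finPOrderType d1) (P2 : finPOrderType d2) (q1 q2 : nat)
    (V1 : P1 -> 'I_q1 -> R) (V2 : P2 -> 'I_q2 -> R) :
  extreme_rays_matrix (@order_cone R d1 P1) V1 ->
  extreme_rays_matrix (@order_cone R d2 P2) V2 ->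
  forall (T : P1 -> P2 -> R) r,
  nd_decomp T r <-> exists H : 'M[R]_(q1, q2), feasible_H V1 V2 T H /\ nn_decomp H r.
Proof.
move=> E1 E2 T r; split.
  move=> [a [b [Ca Cb HT]]].
  have [h Hh] := choice (fun i => @cone_decomp R d1 P1 q1 V1 E1 (a i) (Ca i)).
  have [g Hg] := choice (fun i => @cone_decomp R d2 P2 q2 V2 E2 (b i) (Cb i)).
  exists (\matrix_(k, l) \sum_(i < r) h i k * g i l); split; last first.
    exists h, g; split; [by move=> i k; case: (Hh i) => ->|by move=> i k; case: (Hg i) => ->|].
    by move=> k l; rewrite mxE.
  split.
    move=> k l; rewrite mxE; apply: sumr_ge0 => i _; apply: mulr_ge0.
      by case: (Hh i) => ->.
    by case: (Hg i) => ->.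
  move=> x y; rewrite HT.
  have -> : \sum_(i < r) a i x * b i y =
    \sum_(i < r) (\sum_(k < q1) h i k * V1 x k) * (\sum_(l < q2) g i l * V2 y l).
    by apply: eq_bigr => i _; case: (Hh i) => _ ->; case: (Hg i) => _ ->.
  rewrite sum_alg; apply: eq_bigr => k _; apply: eq_bigr => l _; by rewrite mxE.
move=> [H [[H0 HT] [c [e [c0 e0 He]]]]].
exists (fun i x => \sum_(k < q1) c i k * V1 x k), (fun i y => \sum_(l < q2) e i l * V2 y l).
split; [by move=> i; apply: comb_cone|by move=> i; apply: comb_cone|].
move=> x y; rewrite HT sum_alg; apply: eq_bigr => k _; apply: eq_bigr => l _.
by rewrite He.
Qed.

Lemma nnrank_exists q1 q2 (H : 'M[R]_(q1, q2)) s :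
  nn_decomp H s -> exists2 s', (s' <= s)%N & is_nnrank H s'.
Proof.
elim: s {-2}s (leqnn s) => [|n IH] s hs Hs.
  exists s => //; split=> // t _; by rewrite leqn0 in hs; rewrite (eqP hs).
case: (pselect (forall t, nn_decomp H t -> (s <= t)%N)) => [Hmin|/existsNP [t /not_implyP [Ht Hlt]]].
  by exists s.
have tn : (t <= n)%N by rewrite -ltnS; apply: leq_trans hs; rewrite ltnNge; apply/negP.
have [s' s't Hs'] := IH t tn Ht.
exists s' => //; apply: leq_trans s't _; apply: ltnW; rewrite ltnNge; apply/negP => //.
Qed.

End Main.

Theorem lemma8 (R : realType) (d1 d2 : Order.disp_t)
    (P1 : finPOrderType d1) (P2 : finPOrderType d2) (q1 q2 : nat)
    (V1 : P1 -> 'I_q1 -> R) (V2 : P2 -> 'I_q2 -> R) :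
  extreme_rays_matrix (@order_cone R d1 P1) V1 ->
  extreme_rays_matrix (@order_cone R d2 P2) V2 ->
  forall T : P1 -> P2 -> R, in_Nfin T ->
  forall r : nat,
    is_ndrank T r <->
    ((exists H : 'M[R]_(q1, q2), feasible_H V1 V2 T H /\ is_nnrank H r) /\
     (forall (H : 'M[R]_(q1, q2)) (s : nat),
        feasible_H V1 V2 T H -> is_nnrank H s -> (r <= s)%N)).
Proof.
move=> E1 E2 T _ r; have NI := @nd_iff R d1 d2 P1 P2 q1 q2 V1 V2 E1 E2 T; split.
  move=> [Hr Hmin]; have [H [FH DH]] := (NI r).1 Hr; split.
    exists H; split=> //; split=> // s Ds; apply: Hmin; apply/(NI s); by exists H.
  move=> H' s FH' [Ds _]; apply: Hmin; apply/(NI s); by exists H'.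
move=> [[H [FH [Dr _]]] Hmin]; split.
  apply/(NI r); by exists H.
move=> s /(NI s) [H' [FH' Ds]].
have [s' s's Hs'] := @nnrank_exists R q1 q2 H' s Ds.
apply: leq_trans s's; exact: Hmin FH' Hs'.
Qed.
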